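(* Let $\alpha_1,\alpha_2\in[-1,1]$ with $\alpha_1\alpha_2<0$ and let $\lambda:=\mathrm i\sqrt{-\alpha_1\alpha_2}$. Then, for each choice of sign $\pm$, as $n\to\infty$, $$\sum_{j=2}^n\frac{\Gamma^2(j)}{\Gamma^2(j\pm\lambda)}=\frac{\Gamma^2(n+1)}{(1\mp2\lambda)\,n\,\Gamma^2(n\pm\lambda)}+O(\log n).$$
   Context: $\Gamma$ denotes the Gamma function (evaluated at complex arguments); $\Gamma^2(z)=(\Gamma(z))^2$. *)

(* Defs.v *)
From Stdlib Require Import Reals.
From Coquelicot Require Import Coquelicot.
Open Scope R_scope.

(* Complex power t^z := exp(z ln t) for real t > 0 and complex z,
   written out through Euler's formula. *)
Definition cpowR (t : R) (z : C) : C :=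
  (exp (Re z * ln t) * cos (Im z * ln t), exp (Re z * ln t) * sin (Im z * ln t)).

(* Euler's integral: Gamma z = \int_0^\infty t^(z-1) e^(-t) dt  (meaningful for Re z > 0,
   which covers every argument used in the statement). *)
Definition Gamma (z : C) : C :=
  @RInt_gen C_R_CompleteNormedModule
    (fun t => Cmult (cpowR t (Cminus z (RtoC 1))) (RtoC (exp (- t))))
    (at_right 0) (Rbar_locally p_infty).

(* Main.v *)
Require Import Defs.
From Stdlib Require Import Reals Lra Lia.
From Coquelicot Require Import Coquelicot.
Open Scope R_scope.

Definition FA := at_right 0.
Definition FB := Rbar_locally p_infty.

Lemma Fpos : filter_prod FA FB (fun ab => 0 < fst ab /\ 0 < snd ab).
Proof.
  apply Filter_prod with (fun a => 0 < a) (fun b => 0 < b).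
  - unfold FA, at_right, within. apply filter_forall. auto.
  - exists 0. auto.
  - simpl; auto.
Qed.

Lemma gen_of_lim (g : R -> R) (I : R*R -> R) l :
  filter_prod FA FB (fun ab => is_RInt g (fst ab) (snd ab) (I ab)) ->
  filterlim I (filter_prod FA FB) (locally l) -> is_RInt_gen g FA FB l.
Proof.
  intros H1 H2 P HP. unfold filtermapi.
  apply filter_imp with (fun ab => is_RInt g (fst ab) (snd ab) (I ab) /\ P (I ab)).
  - intros x [Hx1 Hx2]. exists (I x). auto.
  - apply filter_and; [exact H1 | apply H2; exact HP].
Qed.

Lemma normR (x : R) : norm x = Rabs x.
Proof. reflexivity. Qed.

Lemma ballR (x y e : R) : ball x e y <-> Rabs (y - x) < e.
Proof. reflexivity. Qed.

Lemma exI (g : R -> R) :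
  (forall t, 0 < t -> continuous g t) ->
  forall a b, 0 < a -> 0 < b -> ex_RInt g a b.
Proof.
  intros Hc a b Ha Hb. apply (@ex_RInt_continuous R_CompleteNormedModule).
  intros z Hz. apply Hc. assert (0 < Rmin a b) by (apply Rmin_glb_lt; auto). lra.
Qed.

Lemma KB (g : R -> R) (Cc : R) :
  (forall t, 0 < t -> continuous g t) ->
  (forall t, 0 < t -> Rabs (g t) <= Cc * exp (-t/2)) ->
  forall u v, 0 < u -> 0 < v ->
  Rabs (RInt g u v) <= 2 * Cc * Rabs (exp (-u/2) - exp (-v/2)).
Proof.
  intros Hc Hb.
  assert (H : forall u v, 0 < u -> u <= v ->
    Rabs (RInt g u v) <= 2 * Cc * (exp (-u/2) - exp (-v/2))).
  { intros u v Hu Huv.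
    rewrite <- normR.
    apply (norm_RInt_le g (fun t => Cc * exp (-t/2)) u v).
    - exact Huv.
    - intros x Hx. rewrite normR. apply Hb. lra.
    - apply (@RInt_correct R_CompleteNormedModule). apply (@ex_RInt_continuous R_CompleteNormedModule). intros z Hz.
      apply Hc. rewrite Rmin_left in Hz; lra.
    - replace (2 * Cc * (exp (- u / 2) - exp (- v / 2))) with
        (minus ((fun t => -2 * Cc * exp (-t/2)) v) ((fun t => -2 * Cc * exp (-t/2)) u)).
      + apply (@is_RInt_derive R_CompleteNormedModule (fun t => -2 * Cc * exp (-t/2)) (fun t => Cc * exp (-t/2))).
        * intros x Hx. auto_derive. auto. unfold Rdiv. field.
        * intros x Hx. apply (@ex_derive_continuous R_AbsRing R_NormedModule). auto_derive. auto.
      + unfold minus, plus, opp; simpl. ring. }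
  intros u v Hu Hv.
  destruct (Rle_dec u v) as [Huv|Huv].
  - eapply Rle_trans. apply H; auto. 
    assert (0 <= Cc).
    { specialize (Hb u Hu). pose proof (Rabs_pos (g u)). pose proof (exp_pos (-u/2)). nra. }
    apply Rmult_le_compat_l. lra. apply Rle_abs.
  - rewrite <- (opp_RInt_swap g v u) by (apply exI; auto).
    change (Rabs (- (RInt g v u)) <= 2 * Cc * Rabs (exp (- u / 2) - exp (- v / 2))). rewrite Rabs_Ropp.
    eapply Rle_trans. apply H; auto. lra.
    assert (0 <= Cc).
    { specialize (Hb u Hu). pose proof (Rabs_pos (g u)). pose proof (exp_pos (-u/2)). nra. }
    rewrite <- Rabs_Ropp. replace (- (exp (- u / 2) - exp (- v / 2))) with (exp (- v / 2) - exp (- u / 2)) by ring.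
    apply Rmult_le_compat_l. lra. apply Rle_abs.
Qed.

Lemma exp_small (x : R) : 0 < x -> 1 - x/2 <= exp (-x/2) <= 1.
Proof.
  intros Hx. split.
  - pose proof (exp_ineq1_le (-x/2)). lra.
  - rewrite <- exp_0. left. apply exp_increasing. lra.
Qed.

Lemma exp_large (x M : R) : 0 < M -> M < x -> 0 < exp (-x/2) < 2 / M.
Proof.
  intros HM Hx. split. apply exp_pos.
  pose proof (exp_ineq1_le (x/2)) as H1.
  assert (H2 : exp (-x/2) * exp (x/2) = 1).
  { rewrite <- exp_plus. replace (-x/2 + x/2) with 0 by field. apply exp_0. }
  pose proof (exp_pos (-x/2)).
  apply Rmult_lt_reg_r with M. auto.
  replace (2 / M * M) with 2 by (field; lra).
  nra.
Qed.

Lemma ex_gen (g : R -> R) (Cc : R) :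
  0 <= Cc ->
  (forall t, 0 < t -> continuous g t) ->
  (forall t, 0 < t -> Rabs (g t) <= Cc * exp (-t/2)) ->
  exists l, is_RInt_gen g FA FB l.
Proof.
  intros HC Hc Hb.
  set (I := fun ab : R * R => RInt g (fst ab) (snd ab)).
  assert (HL : exists l, filterlim I (filter_prod FA FB) (locally l)).
  { apply (@Hierarchy.filterlim_locally_cauchy (R*R) R_CompleteSpace (filter_prod FA FB)
      (@filter_prod_proper _ _ _ _ (at_right_proper_filter 0) (Rbar_locally_filter p_infty)) I).
    intros eps.
    assert (He : 0 < eps) by apply cond_pos.
    assert (Hd : 0 < eps / (2 * Cc + 1)) by (apply Rdiv_lt_0_compat; lra).
    set (d := eps / (2 * Cc + 1)) in *.
    set (M := 4 * (2 * Cc + 1) / eps).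
    assert (HM : 0 < M) by (unfold M; apply Rdiv_lt_0_compat; lra).
    exists (fun ab => 0 < fst ab < d /\ M < snd ab). split.
    - apply Filter_prod with (fun a => 0 < a < d) (fun b => M < b).
      + unfold FA, at_right, within, locally. exists (mkposreal d Hd). intros y Hy Hy0.
        unfold ball in Hy; simpl in Hy; unfold AbsRing_ball, abs, minus, plus, opp in Hy; simpl in Hy.
        split; auto. rewrite Ropp_0, Rplus_0_r, Rabs_right in Hy; lra.
      + exists M; auto.
      + simpl; auto.
    - intros [a b] [a' b'] [[Ha1 Ha2] Hb1] [[Ha1' Ha2'] Hb1']. simpl in *. apply ballR.
      unfold I; simpl.
      assert (E1 : RInt g a' a + RInt g a b = RInt g a' b).
      { apply (@RInt_Chasles R_CompleteNormedModule); apply exI; auto; lra. }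
      assert (E2 : RInt g a' b + RInt g b b' = RInt g a' b').
      { apply (@RInt_Chasles R_CompleteNormedModule); apply exI; auto; lra. }
      replace (RInt g a' b' - RInt g a b) with (RInt g a' a + RInt g b b') by lra.
      eapply Rle_lt_trans. apply Rabs_triang.
      pose proof (KB g Cc Hc Hb a' a ltac:(lra) ltac:(lra)) as K1.
      pose proof (KB g Cc Hc Hb b b' ltac:(lra) ltac:(lra)) as K2.
      pose proof (exp_small a Ha1). pose proof (exp_small a' Ha1').
      pose proof (exp_large b M HM Hb1). pose proof (exp_large b' M HM Hb1').
      assert (R1 : Rabs (exp (- a' / 2) - exp (- a / 2)) <= d / 2).
      { apply Rabs_le. lra. }
      assert (R2 : Rabs (exp (- b / 2) - exp (- b' / 2)) <= 2 / M).
      { apply Rabs_le. lra. }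
      assert (Cc * d + 4 * Cc / M < eps).
      { unfold d, M. field_simplify; try lra.
        apply Rmult_lt_reg_r with (2 * Cc + 1). lra.
        field_simplify; lra. }
      assert (2 * Cc * Rabs (exp (- a' / 2) - exp (- a / 2)) <= 2 * Cc * (d/2))
        by (apply Rmult_le_compat_l; lra).
      assert (2 * Cc * Rabs (exp (- b / 2) - exp (- b' / 2)) <= 2 * Cc * (2/M))
        by (apply Rmult_le_compat_l; lra).
      replace (4 * Cc / M) with (2 * Cc * (2 / M)) in * by (field; lra).
      lra. }
  destruct HL as [l Hl]. exists l.
  apply gen_of_lim with I; auto.
  apply filter_imp with (2 := Fpos).
  intros [a b] [Ha Hb']. simpl in *. unfold I; simpl.
  apply (@RInt_correct R_CompleteNormedModule). apply exI; auto.
Qed.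

Lemma exp_pow_n (n : nat) (x : R) : exp x ^ n = exp (INR n * x).
Proof.
  induction n as [|n IH]. simpl. rewrite Rmult_0_l, exp_0. reflexivity.
  rewrite S_INR. simpl. rewrite IH, <- exp_plus. f_equal. ring.
Qed.

Lemma pow_exp_bound (q : nat) (t : R) : 0 < t ->
  t ^ q * exp (-t) <= (2 * (INR q + 1)) ^ q * exp (-t/2).
Proof.
  intros Ht. set (k := 2 * (INR q + 1)).
  assert (Hq : 0 <= INR q) by apply pos_INR.
  assert (Hk : 0 < k) by (unfold k; lra).
  assert (H1 : t <= k * exp (t / k)).
  { pose proof (exp_ineq1_le (t/k)).
    apply Rmult_le_reg_l with (/ k). apply Rinv_0_lt_compat; auto.
    replace (/ k * t) with (t / k) by (unfold Rdiv; ring).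
    rewrite <- Rmult_assoc, Rinv_l by lra. lra. }
  assert (H2 : t ^ q <= k ^ q * exp (INR q * (t / k))).
  { rewrite <- exp_pow_n, <- Rpow_mult_distr. apply pow_incr. lra. }
  assert (H3 : exp (INR q * (t / k)) <= exp (t/2)).
  { destruct (Req_dec (INR q * (t / k)) (t/2)) as [E|E]. rewrite E; lra.
    left. apply exp_increasing.
    unfold k. apply Rmult_lt_reg_r with (2 * (INR q + 1)). lra.
    field_simplify; try lra. }
  assert (H4 : exp (t/2) * exp (-t) = exp (-t/2)).
  { rewrite <- exp_plus. f_equal. field. }
  pose proof (exp_pos (-t)). pose proof (exp_pos (t/2)).
  assert (0 < k ^ q) by (apply pow_lt; auto).
  rewrite <- H4.
  apply Rle_trans with (k ^ q * exp (INR q * (t / k)) * exp (-t)).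
  apply Rmult_le_compat_r; lra.
  rewrite <- Rmult_assoc. apply Rmult_le_compat_r. lra.
  apply Rmult_le_compat_l; lra.
Qed.

Definition cq (q : nat) (y t : R) := t ^ q * exp (-t) * cos (y * ln t).
Definition sq (q : nat) (y t : R) := t ^ q * exp (-t) * sin (y * ln t).

Lemma ex_cq q y : exists l, is_RInt_gen (cq q y) FA FB l.
Proof.
  apply ex_gen with ((2 * (INR q + 1)) ^ q).
  - apply pow_le. pose proof (pos_INR q). lra.
  - intros t Ht. apply (@ex_derive_continuous R_AbsRing R_NormedModule).
    unfold cq. auto_derive. auto.
  - intros t Ht. unfold cq. rewrite Rabs_mult.
    eapply Rle_trans; [|apply pow_exp_bound; auto].
    rewrite Rabs_right. 2: { apply Rle_ge, Rmult_le_pos. apply pow_le; lra. left; apply exp_pos. }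
    pose proof (COS_bound (y * ln t)). pose proof (Rabs_le_between (cos (y * ln t)) 1) .
    assert (Rabs (cos (y * ln t)) <= 1) by (apply Rabs_le; lra).
    assert (0 <= t ^ q * exp (- t)) by (apply Rmult_le_pos; [apply pow_le; lra | left; apply exp_pos]).
    nra.
Qed.

Lemma ex_sq q y : exists l, is_RInt_gen (sq q y) FA FB l.
Proof.
  apply ex_gen with ((2 * (INR q + 1)) ^ q).
  - apply pow_le. pose proof (pos_INR q). lra.
  - intros t Ht. apply (@ex_derive_continuous R_AbsRing R_NormedModule).
    unfold sq. auto_derive. auto.
  - intros t Ht. unfold sq. rewrite Rabs_mult.
    eapply Rle_trans; [|apply pow_exp_bound; auto].
    rewrite Rabs_right. 2: { apply Rle_ge, Rmult_le_pos. apply pow_le; lra. left; apply exp_pos. }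
    pose proof (SIN_bound (y * ln t)).
    assert (Rabs (sin (y * ln t)) <= 1) by (apply Rabs_le; lra).
    assert (0 <= t ^ q * exp (- t)) by (apply Rmult_le_pos; [apply pow_le; lra | left; apply exp_pos]).
    nra.
Qed.

Instance FA_proper : ProperFilter FA := at_right_proper_filter 0.
Instance FB_proper : ProperFilter FB := Rbar_locally_filter p_infty.

Lemma pair_gen (f1 f2 : R -> R) l1 l2 :
  is_RInt_gen f1 FA FB l1 -> is_RInt_gen f2 FA FB l2 ->
  @is_RInt_gen C_R_NormedModule (fun t => ((f1 t, f2 t) : C)) FA FB ((l1, l2) : C).
Proof.
  intros H1 H2 P [eps HP]. unfold filtermapi.
  assert (G1 := H1 (ball l1 eps) (locally_ball l1 eps)).
  assert (G2 := H2 (ball l2 eps) (locally_ball l2 eps)).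
  unfold filtermapi in G1, G2.
  apply filter_imp with (2 := filter_and _ _ G1 G2).
  intros ab [[y1 [Hy1 By1]] [y2 [Hy2 By2]]].
  exists ((y1, y2) : C). split.
  - apply (@is_RInt_fct_extend_pair R_NormedModule R_NormedModule (fun t => (f1 t, f2 t))); auto.
  - apply HP. split; auto.
Qed.

Lemma Gamma_val (q : nat) (y : R) :
  Gamma (INR (S q), y) = (RInt_gen (cq q y) FA FB, RInt_gen (sq q y) FA FB).
Proof.
  destruct (ex_cq q y) as [l1 H1]. destruct (ex_sq q y) as [l2 H2].
  rewrite (is_RInt_gen_unique _ l1 H1), (is_RInt_gen_unique _ l2 H2).
  unfold Gamma. change (at_right 0) with FA. change (Rbar_locally p_infty) with FB.
  apply (@is_RInt_gen_unique C_R_CompleteNormedModule FA FB _ _).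
  apply (@is_RInt_gen_ext C_R_NormedModule FA FB _ _ (fun t => ((cq q y t, sq q y t) : C))).
  2: apply pair_gen; auto.
  apply filter_imp with (2 := Fpos). intros [a b] [Ha Hb]. cbn [fst snd] in *. intros x Hx.
  assert (Hx0 : 0 < x).
  { assert (0 < Rmin a b) by (apply Rmin_glb_lt; auto). lra. }
  unfold cpowR, cq, sq, Cminus, Cmult, Cplus, Copp, RtoC, Re, Im. cbn [fst snd].
  replace ((INR (S q) + - (1)) * ln x) with (INR q * ln x) by (rewrite S_INR; ring).
  rewrite <- exp_pow_n, exp_ln by auto.
  replace (y + - 0) with y by ring.
  f_equal; ring.
Qed.

Lemma gen_FTC (phi D : R -> R) :
  (forall t, 0 < t -> is_derive phi t (D t)) ->
  (forall t, 0 < t -> continuous D t) ->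
  filterlim phi FA (locally 0) -> filterlim phi FB (locally 0) ->
  is_RInt_gen D FA FB 0.
Proof.
  intros Hd Hc HA HB.
  apply gen_of_lim with (fun ab => phi (snd ab) - phi (fst ab)).
  - apply filter_imp with (2 := Fpos). intros [a b] [Ha Hb]. cbn [fst snd] in *.
    apply (@is_RInt_derive R_CompleteNormedModule phi D).
    + intros x Hx. apply Hd. assert (0 < Rmin a b) by (apply Rmin_glb_lt; auto). lra.
    + intros x Hx. apply Hc. assert (0 < Rmin a b) by (apply Rmin_glb_lt; auto). lra.
  - intros P [eps HP].
    assert (G1 := HA _ (locally_ball 0 (pos_div_2 eps))).
    assert (G2 := HB _ (locally_ball 0 (pos_div_2 eps))).
    apply Filter_prod with (1 := G1) (2 := G2).
    intros a b Ba Bb. apply HP. cbn [fst snd].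
    apply ballR.
    change (Rabs (phi a - 0) < eps/2) in Ba. change (Rabs (phi b - 0) < eps/2) in Bb.
    rewrite Rminus_0_r in *.
    unfold Rminus. eapply Rle_lt_trans. apply Rabs_triang. rewrite Rabs_Ropp. lra.
Qed.

Lemma lim_phi (phi : R -> R) (q : nat) :
  (forall t, 0 < t -> Rabs (phi t) <= t ^ (S q) * exp (-t)) ->
  filterlim phi FA (locally 0) /\ filterlim phi FB (locally 0).
Proof.
  intros Hb. split.
  - intros P [eps HP]. unfold filtermap, FA, at_right, within, locally.
    assert (H1 : 0 < Rmin 1 eps) by (apply Rmin_glb_lt; [lra | apply cond_pos]).
    exists (mkposreal _ H1). intros t Bt Ht. apply HP. apply ballR.
    change (Rabs (t - 0) < Rmin 1 eps) in Bt. rewrite Rminus_0_r, Rabs_right in Bt by lra.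
    assert (t < 1) by (eapply Rlt_le_trans; [exact Bt| apply Rmin_l]).
    assert (t < eps) by (eapply Rlt_le_trans; [exact Bt| apply Rmin_r]).
    rewrite Rminus_0_r. eapply Rle_lt_trans. apply Hb; auto.
    change (t ^ S q) with (t * t ^ q).
    assert (t ^ q <= 1) by (rewrite <- (pow1 q); apply pow_incr; lra).
    assert (0 <= t ^ q) by (apply pow_le; lra).
    pose proof (exp_small t Ht).
    assert (0 < exp (-t)) by apply exp_pos.
    assert (exp (-t) <= 1) by (rewrite <- exp_0; left; apply exp_increasing; lra).
    assert (t ^ q * exp (-t) <= 1).
    { rewrite <- (Rmult_1_r 1). apply Rmult_le_compat; lra. }
    rewrite Rmult_assoc.
    apply Rle_lt_trans with (t * 1). apply Rmult_le_compat_l; lra. lra.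
  - intros P [eps HP]. unfold filtermap, FB, Rbar_locally.
    set (Cc := (2 * (INR (S q) + 1)) ^ S q).
    assert (HC : 0 < Cc) by (apply pow_lt; pose proof (pos_INR (S q)); lra).
    assert (He : 0 < eps) by apply cond_pos.
    exists (2 * (Cc + 1) / eps). intros t Ht.
    assert (HM : 0 < 2 * (Cc + 1) / eps) by (apply Rdiv_lt_0_compat; lra).
    assert (Htp : 0 < t) by lra.
    apply HP. apply ballR. rewrite Rminus_0_r.
    eapply Rle_lt_trans. apply Hb; auto.
    eapply Rle_lt_trans. apply pow_exp_bound; auto.
    fold Cc.
    destruct (exp_large t _ HM Ht) as [E1 E2].
    apply Rlt_le_trans with (Cc * (2 / (2 * (Cc + 1) / eps))).
    apply Rmult_lt_compat_l; auto.
    replace (Cc * (2 / (2 * (Cc + 1) / eps))) with (eps * (Cc / (Cc + 1))) by (field; lra).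
    rewrite <- (Rmult_1_r eps) at 2. apply Rmult_le_compat_l. lra.
    apply Rmult_le_reg_r with (Cc + 1). lra. field_simplify; lra.
Qed.

Lemma rec_cs (q : nat) (y : R) :
  RInt_gen (cq (S q) y) FA FB = INR (S q) * RInt_gen (cq q y) FA FB - y * RInt_gen (sq q y) FA FB /\
  RInt_gen (sq (S q) y) FA FB = INR (S q) * RInt_gen (sq q y) FA FB + y * RInt_gen (cq q y) FA FB.
Proof.
  destruct (ex_cq q y) as [l1 H1]. destruct (ex_sq q y) as [l2 H2].
  rewrite (is_RInt_gen_unique _ l1 H1), (is_RInt_gen_unique _ l2 H2).
  split.
  - set (phi := fun t => t ^ (S q) * exp (-t) * cos (y * ln t)).
    set (D := fun t => INR (S q) * cq q y t - cq (S q) y t - y * sq q y t).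
    assert (HD : is_RInt_gen D FA FB 0).
    { destruct (lim_phi phi q) as [LA LB].
      { intros t Ht. unfold phi. rewrite Rabs_mult.
        rewrite (Rabs_right (t ^ S q * exp (-t))).
        2:{ apply Rle_ge, Rmult_le_pos. apply pow_le; lra. left; apply exp_pos. }
        pose proof (COS_bound (y * ln t)).
        assert (Rabs (cos (y * ln t)) <= 1) by (apply Rabs_le; lra).
        assert (0 <= t ^ S q * exp (- t)) by (apply Rmult_le_pos; [apply pow_le; lra | left; apply exp_pos]).
        nra. }
      apply gen_FTC with phi; auto.
      - intros t Ht. unfold phi, D, cq, sq. auto_derive. auto.
        change (match q with | 0%nat => 1 | S _ => INR q + 1 end) with (INR (S q)).
        change (t ^ S q) with (t * t ^ q). field. lra.
      - intros t Ht. apply (@ex_derive_continuous R_AbsRing R_NormedModule).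
        unfold D, cq, sq. auto_derive. auto. }
    assert (HH := is_RInt_gen_minus _ _ _ _ (is_RInt_gen_minus _ _ _ _
      (is_RInt_gen_scal _ (INR (S q)) _ H1) (is_RInt_gen_scal _ y _ H2)) HD).
    apply is_RInt_gen_unique.
    replace (INR (S q) * l1 - y * l2) with (minus (minus (scal (INR (S q)) l1) (scal y l2)) 0).
    2:{ unfold minus, plus, opp, scal. simpl. unfold mult. simpl. ring. }
    apply is_RInt_gen_ext with (2 := HH). apply filter_forall. intros ab x _.
    unfold D, minus, plus, opp, scal. simpl. unfold mult. simpl. ring.
  - set (phi := fun t => t ^ (S q) * exp (-t) * sin (y * ln t)).
    set (D := fun t => INR (S q) * sq q y t - sq (S q) y t + y * cq q y t).
    assert (HD : is_RInt_gen D FA FB 0).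
    { destruct (lim_phi phi q) as [LA LB].
      { intros t Ht. unfold phi. rewrite Rabs_mult.
        rewrite (Rabs_right (t ^ S q * exp (-t))).
        2:{ apply Rle_ge, Rmult_le_pos. apply pow_le; lra. left; apply exp_pos. }
        pose proof (SIN_bound (y * ln t)).
        assert (Rabs (sin (y * ln t)) <= 1) by (apply Rabs_le; lra).
        assert (0 <= t ^ S q * exp (- t)) by (apply Rmult_le_pos; [apply pow_le; lra | left; apply exp_pos]).
        nra. }
      apply gen_FTC with phi; auto.
      - intros t Ht. unfold phi, D, cq, sq. auto_derive. auto.
        change (match q with | 0%nat => 1 | S _ => INR q + 1 end) with (INR (S q)).
        change (t ^ S q) with (t * t ^ q). field. lra.
      - intros t Ht. apply (@ex_derive_continuous R_AbsRing R_NormedModule).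
        unfold D, cq, sq. auto_derive. auto. }
    assert (HH := is_RInt_gen_minus _ _ _ _ (is_RInt_gen_plus _ _ _ _
      (is_RInt_gen_scal _ (INR (S q)) _ H2) (is_RInt_gen_scal _ y _ H1)) HD).
    apply is_RInt_gen_unique.
    replace (INR (S q) * l2 + y * l1) with (minus (plus (scal (INR (S q)) l2) (scal y l1)) 0).
    2:{ unfold minus, plus, opp, scal. simpl. unfold mult. simpl. ring. }
    apply is_RInt_gen_ext with (2 := HH). apply filter_forall. intros ab x _.
    unfold D, minus, plus, opp, scal. simpl. unfold mult. simpl. ring.
Qed.

Lemma Gamma_rec (q : nat) (y : R) :
  Gamma (INR (S (S q)), y) = Cmult (INR (S q), y) (Gamma (INR (S q), y)).
Proof.
  rewrite !Gamma_val. destruct (rec_cs q y) as [E1 E2]. rewrite E1, E2.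
  unfold Cmult; cbn [fst snd]. f_equal; ring.
Qed.

Lemma sum_step (F : nat -> C) (m : nat) : (2 <= m)%nat ->
  sum_n_m F 2 (S m) = Cplus (sum_n_m F 2 m) (F (S m)).
Proof. intros H. rewrite sum_n_Sm by lia. reflexivity. Qed.

Lemma ln_step (n : nat) : (1 <= n)%nat -> / (2 * INR n) <= ln (INR (S n)) - ln (INR n).
Proof.
  intros Hn. rewrite S_INR.
  assert (Hx : 1 <= INR n) by (apply (le_INR 1); auto).
  set (x := INR n) in *.
  assert (H1 := exp_ineq1_le (ln (x / (x + 1)))).
  rewrite exp_ln in H1 by (apply Rdiv_lt_0_compat; lra).
  rewrite ln_div in H1 by lra.
  assert (/ (2 * x) <= 1 - x / (x + 1)).
  { replace (1 - x / (x + 1)) with (/ (x + 1)) by (field; lra).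
    apply Rinv_le_contravar; lra. }
  lra.
Qed.

Lemma disc_bound (F : nat -> C) (k c : C) :
  (forall n, (2 <= n)%nat ->
     Cplus (Cminus (F (S n)) (Cmult (Cmult c (RtoC (INR (S n)))) (F (S n))))
           (Cmult (Cmult c (RtoC (INR n))) (F n))
     = Cmult (Cmult k (F (S n))) (RtoC (/ INR n))) ->
  (forall n, (2 <= n)%nat -> Cmod (F (S n)) <= Cmod (F n)) ->
  forall n, (2 <= n)%nat ->
    Cmod (Cminus (sum_n_m F 2 n) (Cmult (Cmult c (RtoC (INR n))) (F n)))
    <= Cmod (F 2%nat) * (1 + 2 * Cmod c) + 2 * Cmod k * Cmod (F 2%nat) * ln (INR n).
Proof.
  intros Hstep Hdec.
  assert (HF : forall n, (2 <= n)%nat -> Cmod (F n) <= Cmod (F 2%nat)).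
  { intros n Hn. induction Hn. lra. eapply Rle_trans. apply Hdec; auto. auto. }
  intros n Hn. induction Hn as [|m Hm IH].
  - rewrite sum_n_n.
    assert (0 <= ln (INR 2)) by (rewrite <- ln_1; apply ln_le; simpl; lra).
    assert (0 <= Cmod k) by apply Cmod_ge_0.
    assert (0 <= Cmod (F 2%nat)) by apply Cmod_ge_0.
    assert (0 <= 2 * Cmod k * Cmod (F 2%nat) * ln (INR 2))
      by (repeat apply Rmult_le_pos; lra).
    unfold Cminus. eapply Rle_trans. apply Cmod_triangle. rewrite Cmod_opp, !Cmod_mult, Cmod_R.
    rewrite Rabs_right by (simpl; lra).
    assert (E2 : INR 2 = 2) by (simpl; lra). rewrite E2 in *.
    assert (0 <= Cmod c) by apply Cmod_ge_0. nra.
  - rewrite sum_step by auto.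
    replace (Cminus (Cplus (sum_n_m F 2 m) (F (S m))) (Cmult (Cmult c (RtoC (INR (S m)))) (F (S m))))
      with (Cplus (Cminus (sum_n_m F 2 m) (Cmult (Cmult c (RtoC (INR m))) (F m)))
              (Cplus (Cminus (F (S m)) (Cmult (Cmult c (RtoC (INR (S m)))) (F (S m))))
                     (Cmult (Cmult c (RtoC (INR m))) (F m)))) by ring.
    rewrite Hstep by auto.
    eapply Rle_trans. apply Cmod_triangle.
    rewrite !Cmod_mult, Cmod_R.
    assert (Hm1 : 2 <= INR m) by (apply (le_INR 2); auto).
    rewrite Rabs_right by (apply Rle_ge; left; apply Rinv_0_lt_compat; lra).
    pose proof (ln_step m ltac:(lia)).
    assert (0 <= Cmod k) by apply Cmod_ge_0.
    pose proof (HF (S m) ltac:(lia)).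
    assert (0 <= Cmod (F (S m))) by apply Cmod_ge_0.
    assert (0 < / INR m) by (apply Rinv_0_lt_compat; lra).
    assert (Einv : / INR m = 2 * / (2 * INR m)) by (field; lra).
    assert (Cmod k * Cmod (F (S m)) * / INR m <= 2 * Cmod k * Cmod (F 2%nat) * / (2 * INR m)).
    { rewrite Einv. assert (Cmod k * Cmod (F (S m)) <= Cmod k * Cmod (F 2%nat)) by (apply Rmult_le_compat_l; auto).
      assert (0 < / (2 * INR m)) by (apply Rinv_0_lt_compat; lra). nra. }
    assert (2 * Cmod k * Cmod (F 2%nat) * / (2 * INR m) <=
            2 * Cmod k * Cmod (F 2%nat) * (ln (INR (S m)) - ln (INR m))).
    { apply Rmult_le_compat_l; auto. assert (0 <= Cmod (F 2%nat)) by apply Cmod_ge_0. nra. }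
    nra.
Qed.

Lemma Cinv0 : Cinv (RtoC 0) = RtoC 0.
Proof. unfold Cinv, RtoC; simpl. f_equal; unfold Rdiv; ring. Qed.

Lemma Cmult_nz (x y : C) : x <> RtoC 0 -> y <> RtoC 0 -> Cmult x y <> RtoC 0.
Proof.
  intros Hx Hy E. apply Cmod_gt_0 in Hx. apply Cmod_gt_0 in Hy.
  assert (Cmod (Cmult x y) = 0) by (rewrite E; apply Cmod_0).
  rewrite Cmod_mult in H. nra.
Qed.

Lemma re_nz (x : C) : Re x <> 0 -> x <> RtoC 0.
Proof. intros H E. apply H. rewrite E. reflexivity. Qed.

Lemma main_abstract (P Q : nat -> C) (a : C) :
  Re a = 0 ->
  (forall q, P (S (S q)) = Cmult (RtoC (INR (S q))) (P (S q))) ->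
  (forall q, Q (S (S q)) = Cmult (Cplus (RtoC (INR (S q))) a) (Q (S q))) ->
  exists K : R, exists N : nat, forall n : nat, (N <= n)%nat ->
    Cmod (Cminus
      (sum_n_m (fun j : nat => Cdiv (Cpow (P j) 2) (Cpow (Q j) 2)) 2 n)
      (Cdiv (Cpow (P (n + 1)%nat) 2)
            (Cmult (Cmult (Cminus (RtoC 1) (Cmult (RtoC 2) a)) (RtoC (INR n)))
                   (Cpow (Q n) 2))))
    <= K * ln (INR n).
Proof.
  intros Ha HP HQ.
  assert (HP' : forall n, (1 <= n)%nat -> P (S n) = Cmult (RtoC (INR n)) (P n)).
  { intros n Hn. destruct n. lia. apply HP. }
  assert (HQ' : forall n, (1 <= n)%nat -> Q (S n) = Cmult (Cplus (RtoC (INR n)) a) (Q n)).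
  { intros n Hn. destruct n. lia. apply HQ. }
  assert (Hna : forall n, (1 <= n)%nat -> Cplus (RtoC (INR n)) a <> RtoC 0).
  { intros n Hn. apply re_nz. rewrite re_plus, Ha, re_RtoC.
    assert (1 <= INR n) by (apply (le_INR 1); auto). lra. }
  assert (Hn0 : forall n, (1 <= n)%nat -> RtoC (INR n) <> RtoC 0).
  { intros n Hn. apply re_nz. rewrite re_RtoC.
    assert (1 <= INR n) by (apply (le_INR 1); auto). lra. }
  assert (H2a : Cminus (RtoC 1) (Cmult (RtoC 2) a) <> RtoC 0).
  { apply re_nz. unfold Cminus. rewrite re_plus, re_opp, re_RtoC.
    rewrite re_scal_l, Ha. lra. }
  assert (Hln : forall n, (3 <= n)%nat -> 1 <= ln (INR n)).
  { intros n Hn. rewrite <- (ln_exp 1). apply ln_le. apply exp_pos.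
    pose proof exp_le_3. assert (3 <= INR n) by (apply (le_INR 3) in Hn; simpl in Hn; lra). lra. }
  destruct (Ceq_dec (Q 2%nat) (RtoC 0)) as [HQ2|HQ2].
  -
    assert (HQz : forall n, (2 <= n)%nat -> Q n = RtoC 0).
    { intros n Hn. induction Hn. auto. rewrite HQ' by lia. rewrite IHHn.
      apply Cmult_0_r. }
    exists 0, 3%nat. intros n Hn.
    rewrite (sum_n_m_ext_loc _ (fun _ => zero)).
    2:{ intros k Hk. rewrite HQz by lia. unfold Cdiv.
        replace (Cpow (RtoC 0) 2) with (RtoC 0) by (simpl; ring). rewrite Cinv0.
        rewrite Cmult_0_r. reflexivity. }
    rewrite sum_n_m_const_zero. rewrite HQz by lia.
    replace (Cpow (RtoC 0) 2) with (RtoC 0) by (simpl; ring).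
    rewrite Cmult_0_r. unfold Cdiv. rewrite Cinv0, Cmult_0_r.
    replace (Cminus zero (RtoC 0)) with (RtoC 0) by (unfold zero; simpl; ring).
    rewrite Cmod_0. lra.
  - assert (HQn : forall n, (2 <= n)%nat -> Q n <> RtoC 0).
    { intros n Hn. induction Hn. auto. rewrite HQ' by lia. apply Cmult_nz; auto. apply Hna. lia. }
    set (F := fun j : nat => Cdiv (Cpow (P j) 2) (Cpow (Q j) 2)).
    set (c := Cinv (Cminus (RtoC 1) (Cmult (RtoC 2) a))).
    set (k := Cmult c (Cpow a 2)).
    assert (Hstep : forall n, (2 <= n)%nat ->
     Cplus (Cminus (F (S n)) (Cmult (Cmult c (RtoC (INR (S n)))) (F (S n))))
           (Cmult (Cmult c (RtoC (INR n))) (F n))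
     = Cmult (Cmult k (F (S n))) (RtoC (/ INR n))).
    { intros n Hn. unfold F, k, c.
      rewrite HP', HQ' by lia. rewrite S_INR, RtoC_plus.
      rewrite RtoC_inv by (assert (1 <= INR n) by (apply (le_INR 1); lia); lra).
      pose proof (HQn n Hn). pose proof (Hna n ltac:(lia)). pose proof (Hn0 n ltac:(lia)).
      set (x := RtoC (INR n)) in *. simpl. field. repeat split; auto. }
    assert (Hdec : forall n, (2 <= n)%nat -> Cmod (F (S n)) <= Cmod (F n)).
    { intros n Hn.
      assert (E : F (S n) = Cmult (F n) (Cpow (Cdiv (RtoC (INR n)) (Cplus (RtoC (INR n)) a)) 2)).
      { unfold F. rewrite HP', HQ' by lia.
        pose proof (HQn n Hn). pose proof (Hna n ltac:(lia)).
        simpl. field. split; auto. }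
      rewrite E, Cmod_mult, Cmod_pow, Cmod_div by (apply Hna; lia).
      assert (1 <= INR n) by (apply (le_INR 1); lia).
      assert (L : Cmod (RtoC (INR n)) <= Cmod (Cplus (RtoC (INR n)) a)).
      { rewrite Cmod_R, Rabs_right by lra.
        eapply Rle_trans; [|apply re_le_Cmod]. rewrite re_plus, Ha, re_RtoC, Rabs_right; lra. }
      assert (0 < Cmod (RtoC (INR n))) by (apply Cmod_gt_0, Hn0; lia).
      assert (0 <= Cmod (F n)) by apply Cmod_ge_0.
      assert (Cmod (RtoC (INR n)) / Cmod (Cplus (RtoC (INR n)) a) <= 1).
      { apply Rmult_le_reg_r with (Cmod (Cplus (RtoC (INR n)) a)). lra.
        field_simplify; lra. }
      assert (0 <= Cmod (RtoC (INR n)) / Cmod (Cplus (RtoC (INR n)) a)).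
      { apply Rdiv_le_0_compat; lra. }
      assert ((Cmod (RtoC (INR n)) / Cmod (Cplus (RtoC (INR n)) a)) ^ 2 <= 1).
      { rewrite <- (pow1 2). apply pow_incr. lra. }
      nra. }
    pose proof (disc_bound F k c Hstep Hdec) as DB.
    set (A := Cmod (F 2%nat) * (1 + 2 * Cmod c)) in DB.
    set (B := 2 * Cmod k * Cmod (F 2%nat)) in DB.
    assert (0 <= A) by (unfold A; pose proof (Cmod_ge_0 (F 2%nat)); pose proof (Cmod_ge_0 c); nra).
    assert (0 <= B) by (unfold B; pose proof (Cmod_ge_0 (F 2%nat)); pose proof (Cmod_ge_0 k); nra).
    exists (A + B), 3%nat. intros n Hn.
    replace (Cdiv (Cpow (P (n + 1)%nat) 2)
            (Cmult (Cmult (Cminus (RtoC 1) (Cmult (RtoC 2) a)) (RtoC (INR n)))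
                   (Cpow (Q n) 2)))
      with (Cmult (Cmult c (RtoC (INR n))) (F n)).
    2:{ rewrite Nat.add_1_r, HP' by lia. unfold F, c.
        pose proof (HQn n ltac:(lia)). pose proof (Hn0 n ltac:(lia)).
        set (x := RtoC (INR n)) in *. simpl. field. repeat split; auto. }
    fold F. eapply Rle_trans. apply DB. lia.
    pose proof (Hln n Hn). nra.
Qed.

Theorem lemma3p4 (alpha1 alpha2 : R) :
  -1 <= alpha1 <= 1 -> -1 <= alpha2 <= 1 -> alpha1 * alpha2 < 0 ->
  let lambda : C := (0, sqrt (- (alpha1 * alpha2))) in
  forall s : R, (s = 1 \/ s = -1) ->
  exists K : R, exists N : nat, forall n : nat, (N <= n)%nat ->
    Cmod (Cminus
      (sum_n_m (fun j : nat =>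
          Cdiv (Cpow (Gamma (RtoC (INR j))) 2)
               (Cpow (Gamma (Cplus (RtoC (INR j)) (Cmult (RtoC s) lambda))) 2)) 2 n)
      (Cdiv (Cpow (Gamma (RtoC (INR (n + 1)))) 2)
            (Cmult (Cmult (Cminus (RtoC 1) (Cmult (RtoC (2 * s)) lambda)) (RtoC (INR n)))
                   (Cpow (Gamma (Cplus (RtoC (INR n)) (Cmult (RtoC s) lambda))) 2))))
    <= K * ln (INR n).
Proof.
  intros H1 H2 H3 lambda s Hs.
  set (mu := sqrt (- (alpha1 * alpha2))) in lambda.
  set (a := Cmult (RtoC s) lambda).
  assert (E2 : Cmult (RtoC (2 * s)) lambda = Cmult (RtoC 2) a).
  { unfold a. rewrite RtoC_mult. ring. }
  rewrite E2.
  assert (Ej : forall j : nat, Cplus (RtoC (INR j)) a = (INR j, s * mu)).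
  { intros j. unfold a, lambda, Cplus, Cmult, RtoC. cbn [fst snd]. f_equal; ring. }
  assert (Ha : Re a = 0).
  { unfold a, lambda, Cmult, RtoC, Re. cbn [fst snd]. ring. }
  apply (main_abstract (fun j => Gamma (RtoC (INR j))) (fun j => Gamma (Cplus (RtoC (INR j)) a)) a Ha).
  - intros q. exact (Gamma_rec q 0).
  - intros q. rewrite !Ej. exact (Gamma_rec q (s * mu)).
Qed.
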